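(* For any integers $p\geq3$ and $k\geq1$, $\lambda^{(1)}(p,k)=\lambda^{(2)}(p,k)$ if and only if $p\leq k$.
   Context: $\lambda^{(1)}(p,k)=0$ if $k\in\{1,2\}$ and $\lambda^{(1)}(p,k)=\sqrt{p\frac{(k-1)^{k-1}}{(k-2)^{k-2}}}$ if $k>2$. For $\lambda>0$: $m_\lambda=\min\left\{1,\left(\frac{(p-2)\sqrt p}{\lambda\sqrt{p-1}}\right)^{1/k}\right\}$; $m_*(\lambda)$ is the largest solution $m\in(0,1]$ of $\frac{\lambda m^k}{\sqrt p}=\frac{m^2}{\sqrt{1-m^2}}$; and $\lambda^{(2)}(p,k)=\inf\{\lambda\geq\lambda^{(1)}(p,k): m_*(\lambda)\geq m_\lambda\}$. *)

(* Defs.v *)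
From Stdlib Require Import Reals.
Open Scope R_scope.

Definition lambda1 (p k : nat) : R :=
  if (k <=? 2)%nat then 0
  else sqrt (INR p * (INR (k - 1) ^ (k - 1) / INR (k - 2) ^ (k - 2))).

Definition m_lam (p k : nat) (lam : R) : R :=
  Rmin 1 (Rpower ((INR p - 2) * sqrt (INR p) / (lam * sqrt (INR p - 1)))
                 (1 / INR k)).

Definition mstar_sol (p k : nat) (lam m : R) : Prop :=
  0 < m <= 1 /\ lam * m ^ k / sqrt (INR p) = m ^ 2 / sqrt (1 - m ^ 2).

Definition is_mstar (p k : nat) (lam m : R) : Prop :=
  mstar_sol p k lam m /\ forall m', mstar_sol p k lam m' -> m' <= m.

(* the set whose infimum is lambda^(2)(p,k) *)
Definition lambda2_set (p k : nat) (lam : R) : Prop :=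
  lambda1 p k <= lam /\ 0 < lam /\
  exists m, is_mstar p k lam m /\ m_lam p k lam <= m.

Definition is_glb (E : R -> Prop) (x : R) : Prop :=
  (forall y, E y -> x <= y) /\ (forall z, (forall y, E y -> z <= y) -> z <= x).

(* Main.v *)
Require Import Defs.
From Stdlib Require Import Reals Lra Lia Psatz.
Open Scope R_scope.

Lemma f_decr (j : nat) (a b : R) :
  INR j / (INR j + 1) <= a -> a < b -> b <= 1 ->
  b ^ j * (1 - b) < a ^ j * (1 - a).
Proof.
  intros Ha Hab Hb.
  assert (Hj : 0 <= INR j) by apply pos_INR.
  assert (Ha0 : 0 <= a).
  { apply Rle_trans with (2 := Ha). apply Rmult_le_pos; auto.
    left; apply Rinv_0_lt_compat; lra. }
  destruct (MVT_cor2 (fun t => t ^ j * (1 - t))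
     (fun c => INR j * c ^ Init.Nat.pred j * (1 - c) + c ^ j * (0 - 1)) a b Hab)
    as [c [Hc1 Hc2]].
  { intros c _.
    apply (derivable_pt_lim_mult (fun y => y ^ j) (fun t => 1 - t)).
    - apply derivable_pt_lim_pow.
    - apply (derivable_pt_lim_minus (fun _ => 1) (fun t => t)).
      + apply derivable_pt_lim_const.
      + apply derivable_pt_lim_id. }
  assert (Hd : INR j * c ^ Init.Nat.pred j * (1 - c) + c ^ j * (0 - 1) < 0).
  { destruct j as [|j].
    - simpl. lra.
    - simpl Init.Nat.pred. rewrite S_INR in *.
      assert (Hc : (INR j + 1) / (INR j + 1 + 1) < c) by lra.
      assert (Hc' : INR j + 1 < (INR j + 1 + 1) * c).
      { apply Rmult_lt_reg_r with (/ (INR j + 1 + 1)).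
        apply Rinv_0_lt_compat; lra.
        replace ((INR j + 1 + 1) * c * / (INR j + 1 + 1)) with c by (field; lra).
        exact Hc. }
      assert (Hcj : 0 < c ^ j) by (apply pow_lt; lra).
      simpl pow. nra. }
  nra.
Qed.

Lemma no_one (p k : nat) lam : 0 < lam -> (1 <= p)%nat ->
  ~ (lam * 1 ^ k / sqrt (INR p) = 1 ^ 2 / sqrt (1 - 1 ^ 2)).
Proof.
  intros Hl Hp H. rewrite pow1 in H.
  replace (1 - 1 ^ 2) with 0 in H by ring. rewrite sqrt_0, Rdiv_0_r in H.
  assert (0 < sqrt (INR p)) by (apply sqrt_lt_R0; apply lt_0_INR; lia).
  assert (0 < lam * 1 / sqrt (INR p)) by (apply Rdiv_lt_0_compat; lra).
  lra.
Qed.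

Lemma eq_j (p j : nat) lam m : 0 < lam -> 0 < m < 1 -> (1 <= p)%nat ->
  (lam * m ^ (S (S j)) / sqrt (INR p) = m ^ 2 / sqrt (1 - m ^ 2) <->
   lam ^ 2 * (m ^ 2) ^ j * (1 - m ^ 2) = INR p).
Proof.
  intros Hl Hm Hp.
  assert (Hs : 0 < sqrt (INR p)) by (apply sqrt_lt_R0; apply lt_0_INR; lia).
  assert (Hu : 0 < sqrt (1 - m ^ 2)) by (apply sqrt_lt_R0; nra).
  assert (Hmj : 0 < m ^ j) by (apply pow_lt; lra).
  assert (Hmj2 : (m ^ 2) ^ j = (m ^ j) ^ 2).
  { rewrite <- !pow_mult. f_equal. lia. }
  assert (Hsp : sqrt (INR p) ^ 2 = INR p) by (apply pow2_sqrt; apply pos_INR).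
  assert (Hsu : sqrt (1 - m ^ 2) ^ 2 = 1 - m ^ 2) by (apply pow2_sqrt; nra).
  replace (m ^ (S (S j))) with (m ^ j * m ^ 2) by (simpl; ring).
  set (s := sqrt (INR p)) in *. set (u := sqrt (1 - m ^ 2)) in *.
  rewrite Hmj2, <- Hsp, <- Hsu.
  split; intro H.
  - assert (H' : lam * m ^ j * u = s).
    { replace (lam * m ^ j * u) with ((lam * (m ^ j * m ^ 2) / s) * (s * u / m ^ 2))
        by (field; split; nra).
      rewrite H. field. split; nra. }
    rewrite <- H'. ring.
  - assert (H' : lam * m ^ j * u = s).
    { rewrite <- (sqrt_pow2 (lam * m ^ j * u)) by (apply Rmult_le_pos; [apply Rmult_le_pos|]; lra).
      rewrite <- (sqrt_pow2 s) by lra. f_equal. rewrite <- H. ring. }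
    rewrite <- H'. field. split; nra.
Qed.

Lemma eq_1 (p : nat) lam m : 0 < lam -> 0 < m < 1 -> (1 <= p)%nat ->
  (lam * m ^ 1 / sqrt (INR p) = m ^ 2 / sqrt (1 - m ^ 2) ->
   lam ^ 2 * (1 - m ^ 2) = INR p * m ^ 2).
Proof.
  intros Hl Hm Hp H.
  assert (Hs : 0 < sqrt (INR p)) by (apply sqrt_lt_R0; apply lt_0_INR; lia).
  assert (Hu : 0 < sqrt (1 - m ^ 2)) by (apply sqrt_lt_R0; nra).
  assert (Hsp : sqrt (INR p) ^ 2 = INR p) by (apply pow2_sqrt; apply pos_INR).
  assert (Hsu : sqrt (1 - m ^ 2) ^ 2 = 1 - m ^ 2) by (apply pow2_sqrt; nra).
  set (s := sqrt (INR p)) in *. set (u := sqrt (1 - m ^ 2)) in *.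
  rewrite <- Hsp, <- Hsu.
  assert (H' : lam * u = s * m).
  { replace (lam * u) with ((lam * m ^ 1 / s) * (s * u / m)) by (field; split; nra).
    rewrite H. field. split; nra. }
  replace (lam ^ 2 * u ^ 2) with ((lam * u) ^ 2) by ring. rewrite H'. ring.
Qed.

Lemma pow_strict (a b : R) (n : nat) : 0 <= a < b -> (1 <= n)%nat -> a ^ n < b ^ n.
Proof.
  intros Hab Hn. induction n as [|n IH]; [lia|].
  destruct n as [|n]; [simpl; lra|].
  assert (a ^ S n < b ^ S n) by (apply IH; lia).
  assert (0 <= a ^ S n) by (apply pow_le; lra).
  simpl pow in *. nra.
Qed.

Lemma rp_pow (x : R) (k : nat) : 0 < x -> (1 <= k)%nat -> Rpower x (1 / INR k) ^ k = x.
Proof.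
  intros Hx Hk.
  assert (HK : 0 < INR k) by (apply lt_0_INR; lia).
  rewrite <- Rpower_pow by (unfold Rpower; apply exp_pos).
  rewrite Rpower_mult. replace (1 / INR k * INR k) with 1 by (field; lra).
  apply Rpower_1; auto.
Qed.

Lemma g_mono (a b : R) : 0 <= a -> a < b -> b < 1 -> a / sqrt (1 - a) < b / sqrt (1 - b).
Proof.
  intros Ha Hab Hb.
  assert (H1 : 0 < sqrt (1 - b)) by (apply sqrt_lt_R0; lra).
  assert (H2 : sqrt (1 - b) < sqrt (1 - a)) by (apply sqrt_lt_1; lra).
  apply Rle_lt_trans with (a / sqrt (1 - b)).
  - unfold Rdiv. apply Rmult_le_compat_l; auto.
    apply Rinv_le_contravar; lra.
  - unfold Rdiv. apply Rmult_lt_compat_r; auto. apply Rinv_0_lt_compat; auto.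
Qed.

Lemma g_s0 (P : R) : 2 < P -> ((P - 2) / (P - 1)) / sqrt (1 - (P - 2) / (P - 1)) = (P - 2) / sqrt (P - 1).
Proof.
  intros HP.
  replace (1 - (P - 2) / (P - 1)) with (/ (P - 1)) by (field; lra).
  rewrite sqrt_inv.
  assert (0 < sqrt (P - 1)) by (apply sqrt_lt_R0; lra).
  assert (Hs : sqrt (P - 1) * sqrt (P - 1) = P - 1) by (apply sqrt_sqrt; lra).
  unfold Rdiv. rewrite Rinv_inv. set (q := sqrt (P - 1)) in *. rewrite <- Hs. field. lra.
Qed.

Lemma mlam_iff (p k : nat) lam m : (3 <= p)%nat -> (1 <= k)%nat -> 0 < lam -> 0 < m < 1 ->
  lam * m ^ k / sqrt (INR p) = m ^ 2 / sqrt (1 - m ^ 2) ->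
  (m_lam p k lam <= m <-> (INR p - 2) / (INR p - 1) <= m ^ 2).
Proof.
  intros Hp Hk Hl Hm Heq.
  assert (HP : 3 <= INR p) by (replace 3 with (INR 3) by (simpl; ring); apply le_INR; auto).
  assert (Hs : 0 < sqrt (INR p)) by (apply sqrt_lt_R0; lra).
  assert (Hs1 : 0 < sqrt (INR p - 1)) by (apply sqrt_lt_R0; lra).
  assert (Hu : 0 < sqrt (1 - m ^ 2)) by (apply sqrt_lt_R0; nra).
  set (x := (INR p - 2) * sqrt (INR p) / (lam * sqrt (INR p - 1))).
  assert (Hx : 0 < x).
  { unfold x. apply Rdiv_lt_0_compat. apply Rmult_lt_0_compat; lra.
    apply Rmult_lt_0_compat; lra. }
  set (y := Rpower x (1 / INR k)).
  assert (Hy : y ^ k = x) by (apply rp_pow; auto).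
  assert (Hy0 : 0 < y) by (unfold y, Rpower; apply exp_pos).
  assert (E1 : m_lam p k lam <= m <-> y <= m).
  { unfold m_lam. fold x. fold y. split; intro H.
    - destruct (Rle_dec 1 y) as [H1|H1].
      + rewrite Rmin_left in H by auto. lra.
      + rewrite Rmin_right in H by lra. auto.
    - apply Rle_trans with y; auto. apply Rmin_r. }
  assert (E2 : y <= m <-> x <= m ^ k).
  { split; intro H.
    - rewrite <- Hy. apply pow_incr. lra.
    - destruct (Rle_lt_dec y m) as [H1|H1]; auto.
      assert (m ^ k < y ^ k) by (apply pow_strict; auto; lra). lra. }
  assert (Hmk : lam * m ^ k = sqrt (INR p) * (m ^ 2 / sqrt (1 - m ^ 2))).
  { rewrite <- Heq. field. lra. }
  assert (E3 : x <= m ^ k <-> (INR p - 2) / sqrt (INR p - 1) <= m ^ 2 / sqrt (1 - m ^ 2)).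
  { unfold x. split; intro H.
    - apply Rmult_le_reg_l with (sqrt (INR p)); auto. rewrite <- Hmk.
      apply Rmult_le_reg_r with (/ lam). apply Rinv_0_lt_compat; auto.
      replace (lam * m ^ k * / lam) with (m ^ k) by (field; lra).
      replace (sqrt (INR p) * ((INR p - 2) / sqrt (INR p - 1)) * / lam)
        with ((INR p - 2) * sqrt (INR p) / (lam * sqrt (INR p - 1))) by (field; lra).
      auto.
    - apply Rmult_le_reg_l with lam; auto. rewrite Hmk.
      replace (lam * ((INR p - 2) * sqrt (INR p) / (lam * sqrt (INR p - 1))))
        with (sqrt (INR p) * ((INR p - 2) / sqrt (INR p - 1))) by (field; lra).
      apply Rmult_le_compat_l; lra. }
  rewrite E1, E2, E3. rewrite <- (g_s0 (INR p)) by lra.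
  assert (Hs0 : 0 <= (INR p - 2) / (INR p - 1)) by (unfold Rdiv; apply Rmult_le_pos; [lra | left; apply Rinv_0_lt_compat; lra]).
  assert (Hs1' : (INR p - 2) / (INR p - 1) < 1).
  { apply Rmult_lt_reg_r with (INR p - 1). lra.
    replace ((INR p - 2) / (INR p - 1) * (INR p - 1)) with (INR p - 2) by (field; lra). lra. }
  split; intro H.
  - destruct (Rle_lt_dec ((INR p - 2) / (INR p - 1)) (m ^ 2)) as [H1|H1]; auto.
    assert (m ^ 2 / sqrt (1 - m ^ 2) < (INR p - 2) / (INR p - 1) / sqrt (1 - (INR p - 2) / (INR p - 1)))
      by (apply g_mono; nra). lra.
  - destruct H as [H|H].
    + left. apply g_mono; nra.
    + rewrite H. lra.
Qed.

Definition ff (j : nat) (t : R) := t ^ j * (1 - t).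

Lemma ff_pos j t : 0 < t < 1 -> 0 < ff j t.
Proof. intros. unfold ff. apply Rmult_lt_0_compat; [apply pow_lt|]; lra. Qed.

Lemma lam1_eq (p j : nat) : (1 <= j)%nat ->
  lambda1 p (S (S j)) = sqrt (INR p / ff j (INR j / (INR j + 1))).
Proof.
  intros Hj. unfold lambda1.
  replace (S (S j) <=? 2)%nat with false by (symmetry; apply Nat.leb_gt; lia).
  replace (S (S j) - 1)%nat with (S j) by lia.
  replace (S (S j) - 2)%nat with j by lia.
  f_equal. unfold ff. rewrite S_INR.
  assert (Hn : 0 < INR j) by (apply lt_0_INR; lia).
  unfold Rdiv. rewrite Rpow_mult_distr, pow_inv. simpl pow at 1.
  assert (0 < INR j ^ j) by (apply pow_lt; lra).
  assert (0 < (INR j + 1) ^ j) by (apply pow_lt; lra).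
  field. repeat split; lra.
Qed.

Lemma div_le a b c d : 0 < b -> 0 < d -> a * d <= c * b -> a / b <= c / d.
Proof.
  intros Hb Hd H. apply Rmult_le_reg_r with (b * d). nra.
  replace (a / b * (b * d)) with (a * d) by (field; lra).
  replace (c / d * (b * d)) with (c * b) by (field; lra). lra.
Qed.

Lemma div_lt a b c d : 0 < b -> 0 < d -> a * d < c * b -> a / b < c / d.
Proof.
  intros Hb Hd H. apply Rmult_lt_reg_r with (b * d). nra.
  replace (a / b * (b * d)) with (a * d) by (field; lra).
  replace (c / d * (b * d)) with (c * b) by (field; lra). lra.
Qed.


Lemma extract (p k : nat) y : (3 <= p)%nat -> (1 <= k)%nat -> lambda2_set p k y ->
  0 < y /\ exists m, 0 < m < 1 /\
    y * m ^ k / sqrt (INR p) = m ^ 2 / sqrt (1 - m ^ 2) /\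
    (INR p - 2) / (INR p - 1) <= m ^ 2.
Proof.
  intros Hp Hk [_ [Hy [m [[[Hm1 Heq] _] Hml]]]].
  split; auto. exists m.
  assert (Hm : m < 1).
  { destruct Hm1 as [_ [H|H]]; auto. subst m. exfalso.
    apply (no_one p k y Hy); auto. lia. }
  repeat split; try lra; auto.
  apply (mlam_iff p k y m); auto. lra.
Qed.

Lemma div_nonneg a b : 0 <= a -> 0 < b -> 0 <= a / b.
Proof. intros. unfold Rdiv. apply Rmult_le_pos; [lra| left; apply Rinv_0_lt_compat; lra]. Qed.

Theorem lemmaB3 (p k : nat) (hp : (3 <= p)%nat) (hk : (1 <= k)%nat) :
  is_glb (lambda2_set p k) (lambda1 p k) <-> (p <= k)%nat.
Proof.
  assert (HP : 3 <= INR p) by (replace 3 with (INR 3) by (simpl; ring); apply le_INR; auto).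
  assert (Hs0 : (INR p - 2) / (INR p - 1) < 1).
  { apply Rmult_lt_reg_r with (INR p - 1). lra.
    replace ((INR p - 2) / (INR p - 1) * (INR p - 1)) with (INR p - 2) by (field; lra). lra. }
  assert (Hs0p : 0 < (INR p - 2) / (INR p - 1)) by (apply Rdiv_lt_0_compat; lra).
  split.
  - intros [H1 H2].
    destruct (Compare_dec.le_lt_dec p k) as [Hle|Hlt]; auto. exfalso.
    destruct k as [|[|j]]; [lia| |].
    +
      assert (Hz : forall y, lambda2_set p 1 y -> 1 <= y).
      { intros y Hy. destruct (extract p 1 y hp hk Hy) as [Hy0 [m [Hm [Heq Ht]]]].
        pose proof (eq_1 p y m Hy0 Hm ltac:(lia) Heq).
        assert (1/2 <= m ^ 2).
        { apply Rle_trans with (2 := Ht). apply div_le; lra. }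
        nra. }
      specialize (H2 1 Hz). unfold lambda1 in H2. simpl in H2. lra.
    + destruct j as [|j].
      * assert (Hz : forall y, lambda2_set p 2 y -> 1 <= y).
        { intros y Hy. destruct (extract p 2 y hp hk Hy) as [Hy0 [m [Hm [Heq Ht]]]].
          apply (eq_j p 0 y m Hy0 Hm ltac:(lia)) in Heq. simpl in Heq. nra. }
        specialize (H2 1 Hz). unfold lambda1 in H2. simpl in H2. lra.
      * set (n := S j) in *.
        assert (Hn : 1 <= INR n) by (unfold n; rewrite S_INR; pose proof (pos_INR j); lra).
        set (s0 := (INR p - 2) / (INR p - 1)) in *.
        assert (Hs0d : s0 = (INR p - 2) / (INR p - 1)) by reflexivity.
        set (t0 := INR n / (INR n + 1)).
    assert (Ht0d : t0 = INR n / (INR n + 1)) by reflexivity.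
        assert (Hnp : INR n + 2 < INR p).
        { replace (INR n + 2) with (INR (S (S n))) by (rewrite !S_INR; ring). apply lt_INR; auto. }
        assert (Ht0 : t0 < s0) by (apply div_lt; nra).
        assert (Ht00 : 0 < t0) by (apply Rdiv_lt_0_compat; lra).
        assert (Hfs : ff n s0 < ff n t0) by (unfold ff; apply f_decr; lra).
        assert (Hfs0 : 0 < ff n s0) by (apply ff_pos; lra).
        set (z := sqrt (INR p / ff n s0)).
        assert (Hz : forall y, lambda2_set p (S (S n)) y -> z <= y).
        { intros y Hy. destruct (extract p (S (S n)) y hp hk Hy) as [Hy0 [m [Hm [Heq Ht]]]].
          apply (eq_j p n y m Hy0 Hm ltac:(lia)) in Heq.
          assert (Hft : ff n (m ^ 2) <= ff n s0).
          { destruct Ht as [Ht|Ht]. left; unfold ff; apply f_decr; nra.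
            rewrite <- Ht, <- Hs0d; lra. }
          assert (Hft0 : 0 < ff n (m ^ 2)) by (apply ff_pos; nra).
          unfold ff in Hft, Hft0.
          unfold z. rewrite <- (sqrt_pow2 y) by lra. apply sqrt_le_1.
          apply div_nonneg; lra. nra.
          apply Rmult_le_reg_r with (ff n s0); auto.
          replace (INR p / ff n s0 * ff n s0) with (INR p) by (field; lra).
          rewrite <- Heq. unfold ff. nra. }
        specialize (H2 z Hz). rewrite lam1_eq in H2 by (unfold n; lia).
        fold t0 in H2.
        assert (sqrt (INR p / ff n t0) < z).
        { unfold z. apply sqrt_lt_1. apply div_nonneg; lra.
          apply div_nonneg; lra. apply div_lt; nra. }
        lra.
  - intros Hle.
    destruct k as [|[|j]]; try lia. destruct j as [|j]; [lia|].
    set (n := S j) in *.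
    assert (Hn : 1 <= INR n) by (unfold n; rewrite S_INR; pose proof (pos_INR j); lra).
    set (s0 := (INR p - 2) / (INR p - 1)) in *.
        assert (Hs0d : s0 = (INR p - 2) / (INR p - 1)) by reflexivity.
    set (t0 := INR n / (INR n + 1)).
    assert (Ht0d : t0 = INR n / (INR n + 1)) by reflexivity.
    assert (Hnp : INR p <= INR n + 2).
    { replace (INR n + 2) with (INR (S (S n))) by (rewrite !S_INR; ring). apply le_INR; auto. }
    assert (Ht0 : s0 <= t0) by (apply div_le; nra).
    assert (Ht1 : t0 < 1) by (apply Rmult_lt_reg_r with (INR n + 1); [lra|]; unfold t0; field_simplify; lra).
    assert (Hft0 : 0 < ff n t0) by (apply ff_pos; lra).
    assert (Hl : 0 < lambda1 p (S (S n))).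
    { rewrite lam1_eq by (unfold n; lia). fold t0. apply sqrt_lt_R0. apply Rdiv_lt_0_compat; lra. }
    assert (Hl2 : lambda1 p (S (S n)) ^ 2 = INR p / ff n t0).
    { rewrite lam1_eq by (unfold n; lia). fold t0. apply pow2_sqrt. apply div_nonneg; lra. }
    set (L := lambda1 p (S (S n))) in *.
    set (m := sqrt t0).
    assert (Hm2 : m ^ 2 = t0) by (apply pow2_sqrt; lra).
    assert (Hm : 0 < m < 1).
    { split. apply sqrt_lt_R0; lra. rewrite <- sqrt_1. apply sqrt_lt_1; lra. }
    assert (Heq : L * m ^ S (S n) / sqrt (INR p) = m ^ 2 / sqrt (1 - m ^ 2)).
    { apply (eq_j p n L m Hl Hm ltac:(lia)). rewrite Hl2, Hm2. replace (INR p / ff n t0 * t0 ^ n * (1 - t0)) with (INR p / ff n t0 * ff n t0) by (unfold ff; ring). field. lra. }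
    assert (HinL : lambda2_set p (S (S n)) L).
    { split; [apply Rle_refl|]. split; auto. exists m. split.
      - split. split; auto; lra.
        intros m' [[Hm'0 Hm'1] Heq'].
        destruct Hm'1 as [Hm'1|Hm'1].
        + apply (eq_j p n L m' Hl (conj Hm'0 Hm'1) ltac:(lia)) in Heq'.
          destruct (Rle_lt_dec m' m) as [H|H]; auto. exfalso.
          assert (ff n (m' ^ 2) < ff n t0) by (unfold ff; apply f_decr; nra).
          rewrite Hl2 in Heq'.
          assert (INR p = INR p / ff n t0 * ff n (m' ^ 2)) by (transitivity (INR p / ff n t0 * (m' ^ 2) ^ n * (1 - m' ^ 2)); [symmetry; exact Heq' | unfold ff; ring]).
          assert (INR p / ff n t0 * ff n (m' ^ 2) < INR p / ff n t0 * ff n t0).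
          { apply Rmult_lt_compat_l; auto. apply Rdiv_lt_0_compat; lra. }
          replace (INR p / ff n t0 * ff n t0) with (INR p) in * by (field; lra). lra.
        + subst m'. exfalso. apply (no_one p (S (S n)) L Hl); [lia|auto].
      - apply (mlam_iff p (S (S n)) L m); auto; lra. }
    split.
    + intros y [Hy _]. exact Hy.
    + intros z Hz. apply Hz. exact HinL.
Qed.
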